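(* Let $(u_1,\dots,u_k)$ be a tuple of linearly independent pairwise orthogonal vectors of $\mathbb{C}^n$. Then for every $\epsilon>0$ there is a tuple $(v_1(\epsilon),\dots,v_k(\epsilon))$ of pairwise orthogonal vectors of $\mathbb{C}^n$ with $\langle v_j(\epsilon),v_j(\epsilon)\rangle\neq 0$ for all $j$, such that $\lim_{\epsilon\to 0}v_j(\epsilon)=u_j$ for all $j=1,\dots,k$.
   Context: $\langle x,y\rangle=\sum_i x_iy_i$ is the bilinear (non-Hermitian) form on $\mathbb{C}^n$, and orthogonality of vectors refers to this form. *)

(* Defs.v *)
From Stdlib Require Import Reals.
Open Scope R_scope.

Record Cx : Type := mkC { Cre : R; Cim : R }.

Definition C0 : Cx := mkC 0 0.
Definition Cadd (z w : Cx) : Cx := mkC (Cre z + Cre w) (Cim z + Cim w).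
Definition Csub (z w : Cx) : Cx := mkC (Cre z - Cre w) (Cim z - Cim w).
Definition Cmul (z w : Cx) : Cx :=
  mkC (Cre z * Cre w - Cim z * Cim w) (Cre z * Cim w + Cim z * Cre w).
Definition Cnorm (z : Cx) : R := sqrt (Cre z * Cre z + Cim z * Cim z).

Fixpoint csum (n : nat) (f : nat -> Cx) : Cx :=
  match n with
  | O => C0
  | S m => Cadd (csum m f) (f m)
  end.

(* A vector of Cx^n is a function nat -> Cx, of which only coordinates
   0 .. n-1 are meaningful. *)
(* bilinear (non-Hermitian) form <x,y> = sum_i x_i y_i on Cx^n *)
Definition bform (n : nat) (x y : nat -> Cx) : Cx :=
  csum n (fun i => Cmul (x i) (y i)).

Definition lin_indep (n k : nat) (u : nat -> nat -> Cx) : Prop :=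
  forall c : nat -> Cx,
    (forall i, (i < n)%nat -> csum k (fun j => Cmul (c j) (u j i)) = C0) ->
    forall j, (j < k)%nat -> c j = C0.

Definition pairwise_orth (n k : nat) (u : nat -> nat -> Cx) : Prop :=
  forall j l, (j < k)%nat -> (l < k)%nat -> j <> l -> bform n (u j) (u l) = C0.

Definition lim0 (n : nat) (f : R -> nat -> Cx) (x : nat -> Cx) : Prop :=
  forall delta, delta > 0 -> exists eta, eta > 0 /\
    forall eps, 0 < eps < eta ->
      forall i, (i < n)%nat -> Cnorm (Csub (f eps i) (x i)) < delta.

(* Main.v *)
Require Import Defs.
From Stdlib Require Import Reals Lra Lia Psatz.
Open Scope R_scope.

Lemma sq_abs (x : R) : x * x = Rabs x * Rabs x.
Proof. rewrite <- Rabs_mult. rewrite Rabs_pos_eq; nra. Qed.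

Lemma Cnorm_bound x p e : 0 <= e ->
  Cnorm (Csub (Cadd x (Cmul (mkC e 0) p)) x) <= e * (Rabs (Cre p) + Rabs (Cim p)).
Proof.
intros He. unfold Cnorm, Csub, Cadd, Cmul; simpl.
replace (Cre x + (e * Cre p - 0 * Cim p) - Cre x) with (e * Cre p) by ring.
replace (Cim x + (e * Cim p + 0 * Cre p) - Cim x) with (e * Cim p) by ring.
assert (H1 := Rabs_pos (Cre p)). assert (H2 := Rabs_pos (Cim p)).
rewrite <- (sqrt_square (e * (Rabs (Cre p) + Rabs (Cim p)))) by nra.
apply sqrt_le_1_alt.
assert (E1 : e * Cre p * (e * Cre p) = e*e*(Cre p * Cre p)) by ring.
assert (E2 : e * Cim p * (e * Cim p) = e*e*(Cim p * Cim p)) by ring.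
rewrite E1, E2, (sq_abs (Cre p)), (sq_abs (Cim p)).
assert (0 <= e*e) by nra.
assert (0 <= Rabs (Cre p) * Rabs (Cim p)) by nra.
nra.
Qed.

Fixpoint rsum (n : nat) (f : nat -> R) : R :=
  match n with O => 0 | S m => rsum m f + f m end.

Lemma rsum_ge0 n f : (forall i, 0 <= f i) -> 0 <= rsum n f.
Proof. intros H; induction n; simpl; [lra| specialize (H n); lra]. Qed.

Lemma rsum_le n f i : (forall i, 0 <= f i) -> (i < n)%nat -> f i <= rsum n f.
Proof.
intros H Hi; induction n as [|n IH]; [lia|].
simpl. destruct (Nat.eq_dec i n) as [->|ne].
- assert (0 <= rsum n f) by (apply rsum_ge0; auto). lra.
- assert (f i <= rsum n f) by (apply IH; lia). specialize (H n). lra.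
Qed.

Lemma lim_lemma n (u : nat -> Cx) (p : nat -> Cx) (s : R -> R) :
  (forall eps, 0 < eps -> 0 <= s eps <= eps) ->
  lim0 n (fun eps i => Cadd (u i) (Cmul (mkC (s eps) 0) (p i))) u.
Proof.
intros Hs delta Hd.
set (f := fun i => Rabs (Cre (p i)) + Rabs (Cim (p i))).
assert (Hf : forall i, 0 <= f i) by (intro i; unfold f; assert (H1 := Rabs_pos (Cre (p i))); assert (H2 := Rabs_pos (Cim (p i))); lra).
set (S := rsum n f).
assert (HS : 0 <= S) by (apply rsum_ge0; auto).
exists (delta / (S + 1)). split.
- apply Rdiv_lt_0_compat; lra.
- intros eps [He1 He2] i Hi.
  destruct (Hs eps He1) as [Hs1 Hs2].
  eapply Rle_lt_trans; [apply Cnorm_bound; auto|].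
  fold (f i).
  assert (Hfi : f i <= S) by (apply rsum_le; auto).
  assert (Hfi0 := Hf i).
  apply Rmult_lt_compat_r with (r := S + 1) in He2; [|lra].
  unfold Rdiv in He2. rewrite Rmult_assoc, Rinv_l, Rmult_1_r in He2 by lra.
  nra.
Qed.

Lemma s_ok (b : bool) eps : 0 < eps -> 0 <= (if b then eps else 0) <= eps.
Proof. destruct b; lra. Qed.

Lemma two_ne0 eps : eps > 0 -> eps + eps <> 0.
Proof. lra. Qed.

Module MC.
From mathcomp Require Import all_boot all_order all_algebra.
From mathcomp Require Import Rstruct complex.
Set Implicit Arguments. Unset Strict Implicit. Unset Printing Implicit Defensive.
Import Order.TTheory GRing.Theory Num.Theory.
Local Open Scope ring_scope.
Notation CC := (complex R).
Definition toC (z : Cx) : CC := Complex (Cre z) (Cim z).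
Definition ofC (z : CC) : Cx := let: Complex a b := z in mkC a b.
Lemma toCK z : ofC (toC z) = z. Proof. by case: z. Qed.
Lemma ofCK z : toC (ofC z) = z. Proof. by case: z. Qed.
Lemma toC_inj : injective toC. Proof. exact: can_inj toCK. Qed.
Lemma toC0 : toC C0 = 0. Proof. by []. Qed.
Lemma toCD z w : toC (Cadd z w) = toC z + toC w. Proof. by []. Qed.
Lemma toCM z w : toC (Cmul z w) = toC z * toC w. Proof. by []. Qed.
Lemma toC_sum n f : toC (csum n f) = \sum_(i < n) toC (f i).
Proof. elim: n => [|n IH]; first by rewrite big_ord0. by rewrite big_ord_recr /= toCD IH. Qed.
Definition bf (n : nat) (x y : nat -> CC) : CC := \sum_(i < n) x i * y i.

Lemma bfC n x y : bf n x y = bf n y x.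
Proof. by apply: eq_bigr => i _; rewrite mulrC. Qed.

Lemma bf_lin_r n k x y c (d : nat -> CC) (z : nat -> nat -> CC) :
  bf n x (fun i => y i - c * \sum_(m < k) d m * z m i) =
  bf n x y - c * \sum_(m < k) d m * bf n x (z m).
Proof.
rewrite /bf.
under [X in _ = _ - c * X]eq_bigr => m _ do rewrite mulr_sumr.
rewrite exchange_big /= mulr_sumr -sumrB; apply: eq_bigr => i _.
rewrite mulrBr; congr (_ - _); rewrite mulrCA; congr (c * _).
rewrite mulr_sumr; apply: eq_bigr => m _; by rewrite mulrCA.
Qed.

Lemma bf_addl n x y z t :
  bf n (fun i => x i + t * y i) z = bf n x z + t * bf n y z.
Proof.
rewrite /bf mulr_sumr -big_split; apply: eq_bigr => i _.
by rewrite mulrDl mulrA.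
Qed.

Lemma bf_addr n x y z t :
  bf n z (fun i => x i + t * y i) = bf n z x + t * bf n z y.
Proof. by rewrite bfC bf_addl (bfC n x) (bfC n y). Qed.

Lemma sum_delta k j (F : nat -> CC) : (j < k)%N ->
  \sum_(m < k) F m * ((m : nat) == j)%:R = F j.
Proof.
move=> Hj; rewrite (bigD1 (Ordinal Hj)) //= eqxx mulr1 big1 ?addr0 // => m.
rewrite -val_eqE /= => /negbTE ->; by rewrite mulr0.
Qed.

Section Alg.
Variables (n k : nat) (ub w0 : nat -> nat -> CC).
Hypothesis Horth : forall j l, (j < k)%N -> (l < k)%N -> j <> l -> bf n (ub j) (ub l) = 0.
Hypothesis Hdual : forall j l, (j < k)%N -> (l < k)%N -> bf n (ub j) (w0 l) = (j == l)%:R.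

Definition aa j := bf n (ub j) (ub j).
Definition P0 m j := bf n (w0 m) (w0 j).
Definition cf m l := if aa m == 0 then P0 m l else 0.
Definition ww l i := w0 l i - 2^-1 * \sum_(m < k) cf m l * ub m i.

Lemma wwE l : ww l = fun i => w0 l i - 2^-1 * \sum_(m < k) cf m l * ub m i.
Proof. by []. Qed.

Lemma L1 j l : (j < k)%N -> (l < k)%N -> bf n (ub j) (ww l) = (j == l)%:R.
Proof.
move=> Hj Hl; rewrite wwE (bf_lin_r _ _ _ _ _ (fun m => cf m l)) Hdual // big1 ?mulr0 ?subr0 // => m _.
case: (eqVneq (m : nat) j) => [<-|ne].
  by rewrite /cf; case: eqP => [|_]; [rewrite /aa => ->; rewrite mulr0 | rewrite mul0r].
by rewrite Horth ?mulr0 //; apply/eqP; rewrite eq_sym.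
Qed.

Lemma L2 j l : (j < k)%N -> (l < k)%N -> aa j = 0 -> aa l = 0 -> bf n (ww j) (ww l) = 0.
Proof.
move=> Hj Hl Haj Hal.
rewrite (wwE l) (bf_lin_r _ _ _ _ _ (fun m => cf m l)).
under eq_bigr => m _ do rewrite (bfC n (ww j)) L1 ?ltn_ord //.
rewrite bfC (wwE j) (bf_lin_r _ _ _ _ _ (fun m => cf m j)).
under [X in _ - 2^-1 * X - _]eq_bigr => m _ do rewrite (bfC n (w0 l)) Hdual ?ltn_ord //.
rewrite (sum_delta (fun m => cf m j) Hl) (sum_delta (fun m => cf m l) Hj) /cf Haj Hal eqxx /P0 (bfC n (w0 l)).
have h : (2^-1 + 2^-1 : CC) = 1 by rewrite {3}(splitr 1) mul1r.
by rewrite -addrA -opprD -mulrDl h mul1r subrr.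
Qed.

Variable t : CC.
Definition ss j := if aa j == 0 then t else 0.
Definition vC j i := ub j i + ss j * ww j i.

Lemma V_orth j l : (j < k)%N -> (l < k)%N -> j <> l -> bf n (vC j) (vC l) = 0.
Proof.
move=> Hj Hl ne.
rewrite /vC bf_addl !bf_addr Horth // L1 // (bfC n (ww j)) L1 //.
have -> : (j == l) = false by apply/eqP.
rewrite eq_sym; have -> : (j == l) = false by apply/eqP.
rewrite !mulr0 !add0r.
rewrite /ss; case: eqP => Ha; last by rewrite !mul0r.
case: eqP => Hb; last by rewrite mul0r mulr0.
by rewrite L2 // !mulr0.
Qed.

Lemma V_self j : (j < k)%N -> bf n (vC j) (vC j) = if aa j == 0 then t + t else aa j.
Proof.
move=> Hj.
rewrite /vC bf_addl !bf_addr L1 // (bfC n (ww j)) L1 // eqxx -/(aa j).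
rewrite /ss; case: eqP => Ha; last by rewrite !mul0r !addr0.
by rewrite L2 // Ha mulr0 addr0 mulr1 add0r.
Qed.
End Alg.

Definition extf (m : nat) (f : 'I_m -> CC) (j : nat) : CC :=
  if @insub _ _ 'I_m j is Some j' then f j' else 0.
Lemma extfE m (f : 'I_m -> CC) (j : 'I_m) : extf f j = f j.
Proof. by rewrite /extf valK. Qed.

Lemma dual_exists n k (ub : nat -> nat -> CC) :
  (forall c : nat -> CC, (forall i, (i < n)%N -> \sum_(j < k) c j * ub j i = 0) ->
     forall j, (j < k)%N -> c j = 0) ->
  exists w0 : nat -> nat -> CC, forall j l, (j < k)%N -> (l < k)%N ->
     bf n (ub j) (w0 l) = (j == l)%:R.
Proof.
move=> Hind.
pose U : 'M[CC]_(k, n) := \matrix_(j < k, i < n) ub j i.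
have : row_free U.
  apply: inj_row_free => v Hv; apply/rowP => j; rewrite mxE.
  rewrite -(extfE (fun j => v 0 j)).
  apply: (Hind (extf (fun j => v 0 j))); last exact: ltn_ord.
  move=> i Hi; transitivity ((v *m U) 0 (Ordinal Hi)); last by rewrite Hv mxE.
  rewrite mxE; by apply: eq_bigr => j0 _; rewrite extfE mxE.
case/row_freeP => B HB.
exists (fun l i => extf (fun i' => extf (fun l' => B i' l') l) i).
move=> j l Hj Hl.
have -> : ((j == l)%:R : CC) = (1%:M : 'M[CC]_k) (Ordinal Hj) (Ordinal Hl) by rewrite mxE.
rewrite -HB mxE /bf; apply: eq_bigr => i _; rewrite mxE extfE.
by rewrite (extfE (fun l' => B i l') (Ordinal Hl)).
Qed.

Lemma toC_bform n x y : toC (bform n x y) = bf n (fun i => toC (x i)) (fun i => toC (y i)).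
Proof. by rewrite /bform toC_sum. Qed.

Theorem lemma22_mc (n k : nat) (u : nat -> nat -> Cx)
  (Hind : lin_indep n k u) (Horth : pairwise_orth n k u) :
  exists v : R -> nat -> nat -> Cx,
    (forall eps, Rgt eps 0 ->
       pairwise_orth n k (v eps) /\
       (forall j, lt j k -> bform n (v eps j) (v eps j) <> C0)) /\
    (forall j, lt j k -> lim0 n (fun eps => v eps j) (u j)).
Proof.
pose ub := fun j i => toC (u j i).
have Hind' : forall c : nat -> CC, (forall i, (i < n)%N -> \sum_(j < k) c j * ub j i = 0) ->
    forall j, (j < k)%N -> c j = 0.
  move=> c Hc j Hj; rewrite -(ofCK (c j)).
  have -> : ofC (c j) = C0; last by [].
  apply: (Hind (fun j => ofC (c j))); last exact: (elimT ssrnat.ltP Hj).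
  move=> i Hi; apply: toC_inj.
  rewrite toC_sum toC0 -[RHS](Hc i (introT ssrnat.ltP Hi)); apply: eq_bigr => j' _; by rewrite toCM ofCK.
have Horth' : forall j l, (j < k)%N -> (l < k)%N -> j <> l -> bf n (ub j) (ub l) = 0.
  move=> j l Hj Hl ne; by rewrite -toC0 -(Horth j l (elimT ssrnat.ltP Hj) (elimT ssrnat.ltP Hl) ne) toC_bform.
have [w0 Hdual] := dual_exists Hind'.
pose s (j : nat) (eps : R) : R := if aa n ub j == 0 then eps else 0.
exists (fun eps j i => Cadd (u j i) (Cmul (mkC (s j eps) 0) (ofC (ww n k ub w0 j i)))).
have key : forall eps j l, toC (bform n (fun i => Cadd (u j i) (Cmul (mkC (s j eps) 0) (ofC (ww n k ub w0 j i))))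
      (fun i => Cadd (u l i) (Cmul (mkC (s l eps) 0) (ofC (ww n k ub w0 l i))))) =
    bf n (vC n k ub w0 (toC (mkC eps 0)) j) (vC n k ub w0 (toC (mkC eps 0)) l).
  move=> eps j l; rewrite toC_bform; apply: eq_bigr => i _.
  rewrite !toCD !toCM !ofCK /vC /ss /s.
  by case: eqP; case: eqP.
split.
  move=> eps Heps; split.
    move=> j l Hj Hl ne; apply: toC_inj; by rewrite key (V_orth Horth' Hdual) //; apply/ssrnat.ltP.
  move=> j Hj H; have := congr1 toC H; rewrite key (V_self Horth' Hdual) ?toC0; last by apply/ssrnat.ltP.
  case: eqP => Ha.
    move/(congr1 (fun z : CC => let: Complex a _ := z in a)) => /= H2.
    by move: H2; rewrite -RplusE; apply: two_ne0.
  exact: Ha.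
move=> j Hj; apply: (lim_lemma n (u j) (fun i => ofC (ww n k ub w0 j i)) (s j)).
move=> eps He; exact: s_ok.
Qed.
End MC.

Theorem lemma22 (n k : nat) (u : nat -> nat -> Cx)
  (Hind : lin_indep n k u) (Horth : pairwise_orth n k u) :
  exists v : R -> nat -> nat -> Cx,
    (forall eps, eps > 0 ->
       pairwise_orth n k (v eps) /\
       (forall j, (j < k)%nat -> bform n (v eps j) (v eps j) <> C0)) /\
    (forall j, (j < k)%nat -> lim0 n (fun eps => v eps j) (u j)).
Proof. exact (MC.lemma22_mc Hind Horth). Qed.
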